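(* Let $(\alpha_{\mathrm p},\alpha_{\mathrm s},\beta_{\mathrm p},\beta_{\mathrm s})\in\mathcal{A}(K,L,T)$ and write $\alpha=(\alpha_{\mathrm p}\mid\alpha_{\mathrm s})=(\alpha_1,\ldots,\alpha_{K+T})$, $\beta=(\beta_{\mathrm p}\mid\beta_{\mathrm s})=(\beta_1,\ldots,\beta_{L+T})$. Then for all $1\le i\le K+T$ and $1\le j\le L+T$, $|(\alpha_i+\operatorname{Set}(\beta_{\mathrm p}))\cap(\operatorname{Set}(\alpha_{\mathrm p})+\beta_j)|\le1$.
   Context: A degree table with parameters $K,L,T$ is a tuple $(\alpha_{\mathrm p},\alpha_{\mathrm s},\beta_{\mathrm p},\beta_{\mathrm s})$ of nonnegative integer vectors of lengths $K,T,L,T$ such that, with $\alpha,\beta$ the concatenations: entries of $\alpha$ are distinct; entries of $\beta$ are distinct; every $n\in\operatorname{Set}(\alpha_{\mathrm p})+\operatorname{Set}(\beta_{\mathrm p})$ has a unique representation $n=i+j$ with $i\in\operatorname{Set}(\alpha)$, $j\in\operatorname{Set}(\beta)$. $\mathcal{A}(K,L,T)$ is the set of degree tables; $\operatorname{Set}(v)$ is the set of entries of $v$, $x+B=\{x+b:b\in B\}$. *)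

(* Defs.v *)
From mathcomp Require Import all_boot.
Set Implicit Arguments. Unset Strict Implicit. Unset Printing Implicit Defensive.

Definition sumset (v w : seq nat) : seq nat := [seq a + b | a <- v, b <- w].

Definition degree_table (K L T : nat) (ap : K.-tuple nat) (as_ : T.-tuple nat)
    (bp : L.-tuple nat) (bs : T.-tuple nat) : Prop :=
  let alpha := ap ++ as_ in
  let beta := bp ++ bs in
  [/\ uniq alpha, uniq beta &
    forall n, n \in sumset ap bp ->
      exists! p : nat * nat, [/\ p.1 \in alpha, p.2 \in beta & n = p.1 + p.2]].

(* Main.v *)
Require Import Defs.
From mathcomp Require Import all_boot.
From mathcomp Require Import zify.

Lemma undup_const (s : seq nat) :
  (forall x y, x \in s -> y \in s -> x = y) -> size (undup s) <= 1.
Proof.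
elim: s => [|x s IH] //= H.
case: ifP => xs.
  apply: IH => a b Ha Hb; apply: H; rewrite inE; apply/orP; right => //.
case: s IH H xs => [|y s] //= IH H xs.
have E : x = y by apply: H; rewrite !inE eqxx ?orbT.
move: xs; rewrite E !inE eqxx //=.
Qed.

Theorem lemma10 (K L T : nat) (ap : K.-tuple nat) (as_ : T.-tuple nat)
    (bp : L.-tuple nat) (bs : T.-tuple nat) :
  degree_table ap as_ bp bs ->
  forall (i : 'I_(K + T)) (j : 'I_(L + T)),
    let alpha_i := tnth (cat_tuple ap as_) i in
    let beta_j := tnth (cat_tuple bp bs) j in
    size (undup [seq x <- sumset [:: alpha_i] bp | x \in sumset ap [:: beta_j]])
      <= 1.
Proof.
move=> [_ _ H] i j /=.
apply: undup_const => x y.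
rewrite !mem_filter /sumset.
move=> /andP[A1 B1] /andP[A2 B2].
case/allpairsP: B1 => [[d1 b1] [/= d1in b1bp E1]].
case/allpairsP: B2 => [[d2 b2] [/= d2in b2bp E2]].
case/allpairsP: A1 => [[a1 c1] [/= a1ap c1in E3]].
case/allpairsP: A2 => [[a2 c2] [/= a2ap c2in E4]].
subst x y.
move: c1in c2in d1in d2in; rewrite !inE => /eqP ec1 /eqP ec2 /eqP ed1 /eqP ed2.
subst c1 c2 d1 d2.
have n1 : a1 + b2 \in [seq a + b | a <- ap, b <- bp].
  by apply/allpairsP; exists (a1, b2).
have [[p1 p2] [[/= _ _ Hp] Hu]] := H _ n1.
have Hin1 : forall a, a \in ap -> a \in ap ++ as_ by move=> a ha; rewrite mem_cat ha.
have Hin2 : forall b, b \in bp -> b \in bp ++ bs by move=> b hb; rewrite mem_cat hb.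
have e1 := Hu (a1, b2) (And3 (Hin1 _ a1ap) (Hin2 _ b2bp) erefl).
have eq2 : a1 + b2 = (a2, b1).1 + (a2, b1).2.
  rewrite /=; move: E3 E4; set u := tnth _ i; set v := tnth _ j; lia.
have e2 := Hu (a2, b1) (And3 (Hin1 _ a2ap) (Hin2 _ b1bp) eq2).
case: e1 => ea _; case: e2 => eb _; move: ea eb E3 E4; set u := tnth _ i; set v := tnth _ j; lia.
Qed.
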